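(* Let $\bar Q=(Q,I)$ be a locally gentle bound quiver and let $\omega$ be a walk of $\bar Q$ that does not kiss itself. If $\omega$ contains as a factor a non-trivial oriented cycle $c$ of $Q$ with $c,c^2\notin I$, then $\omega$ (up to inversion) is of the form $\sigma c^{\pm\infty}$ for some (possibly infinite) substring $\sigma$, where $c^{\infty}=ccc\cdots$ and $c^{-\infty}=(c^{-1})^\infty$.
   Context: Locally gentle bound quiver $\bar Q=(Q,I)$: $Q$ finite, $I$ an ideal of $kQ$ generated by paths of length two ($kQ/I$ possibly infinite-dimensional), each vertex with at most two incoming and two outgoing arrows, and for each arrow $\beta$ at most one $\alpha$ with $t(\alpha)=s(\beta)$, $\alpha\beta\notin I$, at most one with $\alpha\beta\in I$, at most one $\gamma$ with $t(\beta)=s(\gamma)$, $\beta\gamma\notin I$, at most one with $\beta\gamma\in I$. $\bar Q^{\mathrm{bl}}$ adds degree-one blossom vertices and arrows so each vertex of $Q_0$ has two incoming and two outgoing arrows, relations completed to stay locally gentle. A finite string is a composable word $\alpha_1^{\varepsilon_1}\cdots\alpha_\ell^{\varepsilon_\ell}$ in arrows and formal inverses with no factor $\pi^{\pm1}$ for a path $\pi\in I$ and no factor $\alpha\alpha^{-1}$, $\alpha^{-1}\alpha$; an eventually cyclic string is ${}^\infty(c_1^{\varepsilon_1})\sigma(c_2^{\varepsilon_2})^\infty$ with $c_i$ oriented cycles (possibly of length zero) and $c_1^{2\varepsilon_1}\sigma c_2^{2\varepsilon_2}$ a finite string. A walk is a maximal (finite or eventually cyclic) string of $\bar Q^{\mathrm{bl}}$,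 identified with its inverse. For $\omega=\prod_{i<\ell<j}\alpha_\ell^{\varepsilon_\ell}$, a substring $\prod_{i'<\ell<j'}\alpha_\ell^{\varepsilon_\ell}$ ($i\le i'<j'\le j$, strict at finite ends, remembered with its position) is on top if ($i'=-\infty$ or $\varepsilon_{i'}=-1$) and ($j'=\infty$ or $\varepsilon_{j'}=1$), at the bottom if ($i'=-\infty$ or $\varepsilon_{i'}=1$) and ($j'=\infty$ or $\varepsilon_{j'}=-1$). $\omega$ kisses itself if some finite string occurs (at possibly different positions) as a top substring and as a bottom substring of $\omega$. *)

(* Defs.v *)
From HB Require Import structures.
From Stdlib Require Import ZArith.
From mathcomp Require Import all_boot.

Set Implicit Arguments.
Unset Strict Implicit.
Unset Printing Implicit Defensive.

(* A finite quiver (finite vertex type qV, finite arrow type qA, source and *)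
(* target maps) together with the boolean relation [qrel a b] meaning that  *)
(* the length-two path  a b  (a followed by b) is one of the generators of  *)
(* I.  Since I is generated by paths of length two, a path of length two is *)
(* in I iff it is such a generator, and a path lies in I iff one of its     *)
(* length-two factors does.                                                 *)
Record bquiver := BQuiver {
  qV : finType;
  qA : finType;
  qsrc : qA -> qV;
  qtgt : qA -> qV;
  qrel : qA -> qA -> bool }.

Definition indeg (Q : bquiver) (v : qV Q) : nat := #|[pred a | qtgt a == v]|.
Definition outdeg (Q : bquiver) (v : qV Q) : nat := #|[pred a | qsrc a == v]|.

Definition locally_gentle (Q : bquiver) : Prop :=
  (forall a b : qA Q, qrel a b -> qtgt a = qsrc b) /\
  (forall v : qV Q, indeg v <= 2 /\ outdeg v <= 2) /\
  (forall beta : qA Q,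
     #|[pred al | (qtgt al == qsrc beta) && ~~ qrel al beta]| <= 1 /\
     #|[pred al | (qtgt al == qsrc beta) && qrel al beta]| <= 1 /\
     #|[pred ga | (qtgt beta == qsrc ga) && ~~ qrel beta ga]| <= 1 /\
     #|[pred ga | (qtgt beta == qsrc ga) && qrel beta ga]| <= 1).

(* Qb is obtained from Q by
   adding degree-one blossom vertices and blossom arrows (each joining an
   original vertex to a blossom vertex) so that every original vertex has
   exactly two incoming and two outgoing arrows, the relations between
   original arrows are unchanged, and Qb is again locally gentle. *)
Definition is_blossoming (Q Qb : bquiver)
    (iV : qV Q -> qV Qb) (iA : qA Q -> qA Qb) : Prop :=
  injective iV /\ injective iA /\
  (forall a, qsrc (iA a) = iV (qsrc a)) /\
  (forall a, qtgt (iA a) = iV (qtgt a)) /\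
  (forall a b, qrel (iA a) (iA b) = qrel a b) /\
  (forall v, indeg (iV v) = 2 /\ outdeg (iV v) = 2) /\
  (forall w, (forall v, w <> iV v) -> indeg w + outdeg w = 1) /\
  (forall e, (forall a, e <> iA a) ->
     ((exists v, qsrc e = iV v) /\ (forall v, qtgt e <> iV v)) \/
     ((forall v, qsrc e <> iV v) /\ (exists v, qtgt e = iV v))) /\
  locally_gentle Qb.

(* Strings.  A letter is an arrow with an orientation: (a, true) = a,       *)
(* (a, false) = a^{-1}.                                                      *)
Definition letter (Q : bquiver) := (qA Q * bool)%type.

Definition lstart (Q : bquiver) (x : letter Q) : qV Q :=
  if x.2 then qsrc x.1 else qtgt x.1.
Definition lend (Q : bquiver) (x : letter Q) : qV Q :=
  if x.2 then qtgt x.1 else qsrc x.1.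

(* x y is a composable factor which is neither (a factor of) pi^{+-1} with
   pi in I, nor of the form a a^{-1} or a^{-1} a. *)
Definition valid_pair (Q : bquiver) (x y : letter Q) : Prop :=
  lend x = lstart y /\
  ~ (x.1 = y.1 /\ x.2 = ~~ y.2) /\
  (x.2 -> y.2 -> ~~ qrel x.1 y.1) /\
  (~~ x.2 -> ~~ y.2 -> ~~ qrel y.1 x.1).

(* A string  prod_{lo < k < hi} w k ; lo = None means -oo, hi = None means +oo. *)
Record str (Q : bquiver) := Str {
  slo : option Z;
  shi : option Z;
  sw : Z -> letter Q }.

Definition indom (lo hi : option Z) (k : Z) : Prop :=
  (match lo with Some i => (i < k)%Z | None => True end) /\
  (match hi with Some j => (k < j)%Z | None => True end).

(* finite or eventually cyclic string: every infinite end is eventually a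
   power c^{+-infinity} of an oriented cycle c of positive length (periodic
   with constant orientation) *)
Definition is_string (Q : bquiver) (s : str Q) : Prop :=
  (forall i j, slo s = Some i -> shi s = Some j -> (i < j)%Z) /\
  (forall k, indom (slo s) (shi s) k -> indom (slo s) (shi s) (k + 1) ->
     valid_pair (sw s k) (sw s (k + 1))) /\
  (slo s = None -> exists N p, (0 < p)%Z /\ indom (slo s) (shi s) N /\
     forall k, (k <= N)%Z -> sw s (k - p) = sw s k /\ (sw s k).2 = (sw s N).2) /\
  (shi s = None -> exists N p, (0 < p)%Z /\ indom (slo s) (shi s) N /\
     forall k, (N <= k)%Z -> sw s (k + p) = sw s k /\ (sw s k).2 = (sw s N).2).

Definition upd (Q : bquiver) (f : Z -> letter Q) (i : Z) (x : letter Q) :=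
  fun k => if Z.eqb k i then x else f k.

(* a walk: a maximal string (no letter can be added at a finite end) *)
Definition is_walk (Q : bquiver) (s : str Q) : Prop :=
  is_string s /\
  (forall i x, slo s = Some i ->
     ~ is_string (Str (Some (i - 1)%Z) (shi s) (upd (sw s) i x))) /\
  (forall j x, shi s = Some j ->
     ~ is_string (Str (slo s) (Some (j + 1)%Z) (upd (sw s) j x))).

Definition str_inv (Q : bquiver) (s : str Q) : str Q :=
  Str (option_map Z.opp (shi s)) (option_map Z.opp (slo s))
      (fun k => ((sw s (- k)%Z).1, ~~ (sw s (- k)%Z).2)).

(* The finite substring prod_{a < k < b} w k (a, b in the domain, a < b) is *)
(* on top if w a is an inverse letter and w b a direct letter, and at the   *)
(* bottom if w a is direct and w b inverse.  Its start vertex is lend (w a) *)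
(* (needed to distinguish trivial substrings).                              *)
Definition top_at (Q : bquiver) (s : str Q) (a b : Z) : Prop :=
  indom (slo s) (shi s) a /\ indom (slo s) (shi s) b /\ (a < b)%Z /\
  (sw s a).2 = false /\ (sw s b).2 = true.

Definition bot_at (Q : bquiver) (s : str Q) (a b : Z) : Prop :=
  indom (slo s) (shi s) a /\ indom (slo s) (shi s) b /\ (a < b)%Z /\
  (sw s a).2 = true /\ (sw s b).2 = false.

Definition same_sub (Q : bquiver) (s : str Q) (a b a' b' : Z) : Prop :=
  (b - a = b' - a')%Z /\ lend (sw s a) = lend (sw s a') /\
  forall k, (0 < k < b - a)%Z -> sw s (a + k)%Z = sw s (a' + k)%Z.

Definition inv_sub (Q : bquiver) (s : str Q) (a b a' b' : Z) : Prop :=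
  (b - a = b' - a')%Z /\ lend (sw s a) = lstart (sw s b') /\
  forall k, (0 < k < b - a)%Z ->
    sw s (a + k)%Z = ((sw s (b' - k)%Z).1, ~~ (sw s (b' - k)%Z).2).

Definition kisses_itself (Q : bquiver) (s : str Q) : Prop :=
  exists a b a' b', top_at s a b /\ bot_at s a' b' /\
    (same_sub s a b a' b' \/ inv_sub s a b a' b').

Definition cycle_not_in_I (Q : bquiver) (m : nat) (c : nat -> qA Q) : Prop :=
  0 < m /\
  forall l, l < m ->
    qtgt (c l) = qsrc (c (l.+1 %% m)) /\ ~~ qrel (c l) (c (l.+1 %% m)).

Definition has_cycle_factor (Q Qb : bquiver) (iA : qA Q -> qA Qb)
    (s : str Qb) (m : nat) (c : nat -> qA Q) : Prop :=
  exists k : Z,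
    (forall l, l < m -> indom (slo s) (shi s) (k + Z.of_nat l)%Z) /\
    ((forall l, l < m -> sw s (k + Z.of_nat l)%Z = (iA (c l), true)) \/
     (forall l, l < m -> sw s (k + Z.of_nat l)%Z = (iA (c (m - 1 - l)), false))).

Definition ends_with_cycle (Q Qb : bquiver) (iA : qA Q -> qA Qb)
    (s : str Qb) (m : nat) (c : nat -> qA Q) : Prop :=
  shi s = None /\
  exists N : Z, indom (slo s) (shi s) N /\
    ((forall n : nat, sw s (N + Z.of_nat n)%Z = (iA (c (n %% m)), true)) \/
     (forall n : nat, sw s (N + Z.of_nat n)%Z = (iA (c (m - 1 - n %% m)), false))).

(* Main.v *)
Require Import Defs.
From Stdlib Require Import ZArith Lia Classical.
From mathcomp Require Import all_boot zify.
Local Open Scope Z_scope.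

Lemma min_fail (P : nat -> Prop) :
  (exists n, ~ P n) -> exists n, ~ P n /\ forall j, (j < n)%N -> P j.
Proof.
  intros [n Hn].
  assert (H : forall N n, (n <= N)%N -> ~ P n ->
            exists n, ~ P n /\ forall j, (j < n)%N -> P j).
  { induction N as [|N IH]; intros n0 Hle Hn0.
    - exists n0; split; [exact Hn0|]. intros j Hj; lia.
    - destruct (classic (forall j, (j < n0)%N -> P j)) as [Hall|Hno].
      + exists n0; auto.
      + apply not_all_ex_not in Hno. destruct Hno as [j Hj].
        apply imply_to_and in Hj. destruct Hj as [Hj1 Hj2].
        apply (IH j); [lia|exact Hj2]. }
  exact (H n n (leqnn n) Hn).
Qed.

Lemma indom_next (lo hi : option Z) (i : Z) :
  indom lo hi i -> ~ indom lo hi (i + 1) -> hi = Some (i + 1).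
Proof.
  destruct lo, hi; unfold indom in *; simpl; intros [H1 H2] H3; try (f_equal; lia);
  exfalso; apply H3; split; try lia; trivial.
Qed.

Lemma indom_prev (lo hi : option Z) (i : Z) :
  indom lo hi i -> ~ indom lo hi (i - 1) -> lo = Some (i - 1).
Proof.
  destruct lo, hi; unfold indom in *; simpl; intros [H1 H2] H3; try (f_equal; lia);
  exfalso; apply H3; split; try lia; trivial.
Qed.

Lemma abstract_run (lo hi : option Z) (R B : Z -> Prop) (k0 : Z) (m : nat) :
  (0 < m)%N ->
  (forall l, (l < m)%N -> R (k0 + Z.of_nat l)%Z) ->
  (forall i, R i -> indom lo hi i) ->
  (forall i, R i -> indom lo hi (i + 1) -> R (i + 1)%Z \/ B (i + 1)%Z) ->
  (forall i, R i -> indom lo hi (i - 1) -> R (i - 1)%Z \/ B (i - 1)%Z) ->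
  (forall l, lo = Some l -> ~ R (l + 1)%Z) ->
  (forall h, hi = Some h -> ~ R (h - 1)%Z) ->
  (forall a b, B a -> B b -> (a < k0)%Z -> (k0 + Z.of_nat m <= b)%Z ->
     (forall i, (a < i < b)%Z -> R i) -> False) ->
  (forall n : nat, R (k0 + Z.of_nat n)%Z) \/
  (forall n : nat, R (k0 - 1 - Z.of_nat n)%Z).
Proof.
  intros Hm H0 Hdom Hr Hl Hlo Hhi Hk.
  destruct (classic (forall n : nat, R (k0 + Z.of_nat n)%Z)) as [Hy|Hn1]; [left; exact Hy|].
  right.
  destruct (classic (forall n : nat, R (k0 - 1 - Z.of_nat n)%Z)) as [Hy|Hn2]; [exact Hy|].
  exfalso.
  apply not_all_ex_not in Hn1. apply not_all_ex_not in Hn2.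
  destruct (min_fail _ Hn1) as [n1 [Hn1a Hn1b]].
  destruct (min_fail _ Hn2) as [n2 [Hn2a Hn2b]].
  assert (Hn1m : (m <= n1)%N).
  { destruct (Nat.lt_ge_cases n1 m) as [Hlt|Hge]; [|apply/leP; exact Hge].
    exfalso; apply Hn1a; apply H0; apply/ltP; exact Hlt. }
  set (b := (k0 + Z.of_nat n1)%Z).
  assert (HRb : R (b - 1)%Z).
  { replace (b - 1)%Z with (k0 + Z.of_nat (n1 - 1))%Z by (unfold b; lia).
    apply Hn1b; lia. }
  assert (HBb : B b).
  { destruct (classic (indom lo hi b)) as [Hd|Hd].
    - destruct (Hr _ HRb) as [H|H]; replace (b - 1 + 1)%Z with b in * by lia;
        [exact Hd| |exact H]. exfalso; apply Hn1a; exact H.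
    - exfalso. pose proof (indom_next lo hi (b - 1) (Hdom _ HRb)) as E.
      replace (b - 1 + 1)%Z with b in E by lia.
      apply (Hhi b); [apply E; exact Hd| exact HRb]. }
  set (a := (k0 - 1 - Z.of_nat n2)%Z).
  assert (HRa : R (a + 1)%Z).
  { destruct n2 as [|n2'].
    - replace (a + 1)%Z with (k0 + Z.of_nat 0)%Z by (unfold a; lia). apply H0; lia.
    - replace (a + 1)%Z with (k0 - 1 - Z.of_nat n2')%Z by (unfold a; lia).
      apply Hn2b; lia. }
  assert (HBa : B a).
  { destruct (classic (indom lo hi a)) as [Hd|Hd].
    - destruct (Hl _ HRa) as [H|H]; replace (a + 1 - 1)%Z with a in * by lia;
        [exact Hd| |exact H]. exfalso; apply Hn2a; exact H.
    - exfalso. pose proof (indom_prev lo hi (a + 1) (Hdom _ HRa)) as E.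
      replace (a + 1 - 1)%Z with a in E by lia.
      apply (Hlo a); [apply E; exact Hd| exact HRa]. }
  apply (Hk a b HBa HBb); [unfold a; lia | unfold b; lia |].
  intros i Hi.
  destruct (Z.le_gt_cases k0 i) as [Hge|Hlt].
  - replace i with (k0 + Z.of_nat (Z.to_nat (i - k0)))%Z by lia.
    apply Hn1b. unfold b in Hi; lia.
  - replace i with (k0 - 1 - Z.of_nat (Z.to_nat (k0 - 1 - i)))%Z by lia.
    apply Hn2b. unfold a in Hi; lia.
Qed.


Definition ph (m : nat) (k0 i : Z) : nat := Z.to_nat ((i - k0) mod Z.of_nat m).

Section Ph.
Variables (m : nat) (k0 : Z).
Hypothesis Hm : (0 < m)%N.

Lemma ph_lt i : (ph m k0 i < m)%N.
Proof.
  unfold ph. have H := Z.mod_pos_bound (i - k0) (Z.of_nat m) ltac:(lia). lia.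
Qed.

Lemma ph_succ i :
  (ph m k0 i = (m - 1)%N /\ ph m k0 (i + 1) = 0%N) \/
  ((ph m k0 i < m - 1)%N /\ ph m k0 (i + 1) = (ph m k0 i).+1).
Proof.
  unfold ph.
  have H := Z.mod_pos_bound (i - k0) (Z.of_nat m) ltac:(lia).
  have E : (i + 1 - k0) mod Z.of_nat m = ((i - k0) mod Z.of_nat m + 1) mod Z.of_nat m.
  { rewrite Zplus_mod_idemp_l. f_equal. lia. }
  rewrite E.
  destruct (Z.eq_dec ((i - k0) mod Z.of_nat m + 1) (Z.of_nat m)) as [Heq|Hne].
  - left. rewrite Heq Z_mod_same_full. lia.
  - right. rewrite (Z.mod_small ((i - k0) mod Z.of_nat m + 1)); lia.
Qed.

Lemma ph_per i : ph m k0 (i + Z.of_nat m) = ph m k0 i.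
Proof.
  unfold ph. f_equal.
  replace (i + Z.of_nat m - k0) with ((i - k0) + 1 * Z.of_nat m) by lia.
  apply Z_mod_plus_full.
Qed.

Lemma nextE x : (x < m)%N -> x.+1 %% m = if x == (m - 1)%N then 0%N else x.+1.
Proof.
  move=> Hx. case: eqP => [->|Hne].
  - have -> : (m - 1).+1 = m by lia. by rewrite modnn.
  - rewrite modn_small //. lia.
Qed.

Lemma ph_next1 i : ph m k0 (i + 1) = (ph m k0 i).+1 %% m.
Proof.
  rewrite nextE; last by apply ph_lt.
  case: eqP; have := ph_succ i; lia.
Qed.

Lemma ph_next2 i : (m - 1 - ph m k0 i)%N = (m - 1 - ph m k0 (i + 1))%N.+1 %% m.
Proof.
  have h1 := ph_lt i. have h2 := ph_lt (i + 1).
  rewrite nextE; last by lia.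
  case: eqP; have := ph_succ i; lia.
Qed.

Lemma ph_k0 (n : nat) : ph m k0 (k0 + Z.of_nat n) = n %% m.
Proof.
  elim: n => [|n IH].
  - unfold ph. rewrite mod0n. replace (k0 + Z.of_nat 0 - k0) with 0 by lia.
    by rewrite Zmod_0_l.
  - replace (k0 + Z.of_nat n.+1) with (k0 + Z.of_nat n + 1) by lia.
    rewrite ph_next1 IH. by rewrite -addn1 modnDml addn1.
Qed.

Lemma ph_km1 (n : nat) : ph m k0 (k0 - 1 - Z.of_nat n) = (m - 1 - n %% m)%N.
Proof.
  elim: n => [|n IH].
  - rewrite mod0n. have := ph_succ (k0 - 1).
    replace (k0 - 1 + 1) with (k0 + Z.of_nat 0) by lia. rewrite ph_k0 mod0n.
    replace (k0 - 1 - Z.of_nat 0) with (k0 - 1) by lia. lia.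
  - have := ph_succ (k0 - 1 - Z.of_nat n.+1).
    replace (k0 - 1 - Z.of_nat n.+1 + 1) with (k0 - 1 - Z.of_nat n) by lia.
    rewrite IH.
    have Hn : (n %% m < m)%N by rewrite ltn_mod.
    have -> : n.+1 %% m = (n %% m).+1 %% m by rewrite -[n.+1]addn1 -[(n %% m).+1]addn1 modnDml.
    rewrite nextE //. case: eqP; lia.
Qed.
End Ph.


Lemma ext_left (Q : bquiver) (s : str Q) (l : Z) (x : letter Q) :
  is_string s -> slo s = Some l -> indom (slo s) (shi s) (l + 1) ->
  valid_pair x (sw s (l + 1)) ->
  is_string (Str (Some (l - 1)) (shi s) (upd (sw s) l x)).
Proof.
  move=> [H1 [H2 [H3 H4]]] Hlo Hd Hv.
  rewrite Hlo in H2 H3 H4 Hd. unfold indom in Hd.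
  split; [|split; [|split]]; simpl.
  - move=> i j [<-] Hj. rewrite Hj in Hd. lia.
  - move=> k Hk Hk1. unfold upd.
    destruct (Z.eqb_spec k l) as [->|Hne].
    + destruct (Z.eqb_spec (l + 1) l); [lia|]. exact Hv.
    + destruct (Z.eqb_spec (k + 1) l); [unfold indom in Hk; lia|].
      apply H2; unfold indom in *; simpl in *; destruct (shi s); lia.
  - by [].
  - move=> Hn. destruct (H4 Hn) as [N [p [Hp [HN HP]]]].
    exists N, p. unfold indom in HN. rewrite Hn in HN. split; [exact Hp|split].
    + unfold indom; rewrite Hn; split; [lia|trivial].
    + move=> k Hk. unfold upd.
      destruct (Z.eqb_spec (k + p) l); [lia|].
      destruct (Z.eqb_spec k l); [lia|].
      destruct (Z.eqb_spec N l); [lia|]. apply HP; exact Hk.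
Qed.

Lemma ext_right (Q : bquiver) (s : str Q) (h : Z) (x : letter Q) :
  is_string s -> shi s = Some h -> indom (slo s) (shi s) (h - 1) ->
  valid_pair (sw s (h - 1)) x ->
  is_string (Str (slo s) (Some (h + 1)) (upd (sw s) h x)).
Proof.
  move=> [H1 [H2 [H3 H4]]] Hhi Hd Hv.
  rewrite Hhi in H2 H3 H4 Hd. unfold indom in Hd.
  split; [|split; [|split]]; simpl.
  - move=> i j Hi [<-]. rewrite Hi in Hd. lia.
  - move=> k Hk Hk1. unfold upd.
    destruct (Z.eqb_spec (k + 1) h) as [E|Hne].
    + destruct (Z.eqb_spec k h); [lia|].
      replace k with (h - 1) by lia. exact Hv.
    + destruct (Z.eqb_spec k h) as [Ek|Nk].
      { exfalso. unfold indom in Hk1. simpl in Hk1. lia. }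
      apply H2; unfold indom in *; simpl in *; destruct (slo s); lia.
  - move=> Hn. destruct (H3 Hn) as [N [p [Hp [HN HP]]]].
    exists N, p. unfold indom in HN. rewrite Hn in HN. split; [exact Hp|split].
    + unfold indom; rewrite Hn; split; [trivial|lia].
    + move=> k Hk. unfold upd.
      destruct (Z.eqb_spec (k - p) h); [lia|].
      destruct (Z.eqb_spec k h); [lia|].
      destruct (Z.eqb_spec N h); [lia|]. apply HP; exact Hk.
  - by [].
Qed.


Section Main.
Variables (Q Qb : bquiver) (iV : qV Q -> qV Qb) (iA : qA Q -> qA Qb).
Hypothesis hb : is_blossoming iV iA.
Variables (m : nat) (c : nat -> qA Q).
Hypothesis hc : cycle_not_in_I m c.
Variables (s : str Qb) (k0 : Z).

Definition L (x y : qA Qb) := qtgt x = qsrc y /\ ~~ qrel x y.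

Lemma Hm : (0 < m)%N.
Proof. exact hc.1. Qed.

Lemma out_uniq a b b' : L a b -> L a b' -> b = b'.
Proof.
  case: hb => _ [_ [_ [_ [_ [_ [_ [_ [_ [_ Hg]]]]]]]]].
  case: (Hg a) => _ [_ [Hout _]].
  move=> [Hb1 Hb2] [Hb1' Hb2'].
  move/card_le1P: Hout => Hout.
  have Hbin : b \in [pred ga | (qtgt a == qsrc ga) && ~~ qrel a ga].
  { by rewrite inE Hb1 eqxx Hb2. }
  have := Hout b Hbin b'. rewrite !inE Hb1' eqxx Hb2' /=.
  by move=> /esym /eqP.
Qed.

Lemma in_uniq a a' b : L a b -> L a' b -> a = a'.
Proof.
  case: hb => _ [_ [_ [_ [_ [_ [_ [_ [_ [_ Hg]]]]]]]]].
  case: (Hg b) => Hin _.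
  move=> [Hb1 Hb2] [Hb1' Hb2'].
  move/card_le1P: Hin => Hin.
  have Hbin : a \in [pred al | (qtgt al == qsrc b) && ~~ qrel al b].
  { by rewrite inE Hb1 eqxx Hb2. }
  have := Hin a Hbin a'. rewrite !inE Hb1' eqxx Hb2' /=.
  by move=> /esym /eqP.
Qed.

Lemma Lcyc j : (j < m)%N -> L (iA (c j)) (iA (c (j.+1 %% m))).
Proof.
  move=> Hj. case: hb => _ [_ [Hs [Ht [Hr _]]]].
  case: (hc.2 j Hj) => E1 E2.
  split; [by rewrite Ht Hs E1 | by rewrite Hr].
Qed.

Definition cc (o : bool) (i : Z) : qA Q :=
  if o then c (ph m k0 i) else c (m - 1 - ph m k0 i)%N.

Lemma Lrun_t i : L (iA (cc true i)) (iA (cc true (i + 1))).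
Proof. rewrite /cc (ph_next1 m k0 Hm i). apply Lcyc. apply ph_lt, Hm. Qed.

Lemma Lrun_f i : L (iA (cc false (i + 1))) (iA (cc false i)).
Proof.
  rewrite /cc (ph_next2 m k0 Hm i). apply Lcyc. have := Hm. lia.
Qed.

Lemma vp_same (o : bool) a b :
  valid_pair (a, o) (b, o) <-> (if o then L a b else L b a).
Proof.
  case: o; rewrite /valid_pair /lend /lstart /L /=; split.
  - move=> [H1 [_ [H3 _]]]. split; [exact H1 | exact (H3 isT isT)].
  - move=> [H1 H2]. split; [exact H1|split; [move=> [_ H]; discriminate H|]].
    split; [move=> _ _; exact H2| by []].
  - move=> [H1 [_ [_ H4]]]. split; [by rewrite H1 | exact (H4 isT isT)].
  - move=> [H1 H2]. split; [by rewrite H1|split; [move=> [_ H]; discriminate H|]].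
    split; [by []| move=> _ _; exact H2].
Qed.

Lemma valid_run o i : valid_pair (iA (cc o i), o) (iA (cc o (i + 1)), o).
Proof. apply vp_same. case: o; [apply Lrun_t | apply Lrun_f]. Qed.

Definition R o i := indom (slo s) (shi s) i /\ sw s i = (iA (cc o i), o).
Definition B o i := indom (slo s) (shi s) i /\ (sw s i).2 = ~~ o.

Hypothesis Hs : is_string s.

Lemma step_right o i : R o i -> indom (slo s) (shi s) (i + 1) -> R o (i + 1) \/ B o (i + 1).
Proof.
  move=> [Hd Hi] Hd1. have Hv := Hs.2.1 i Hd Hd1. rewrite Hi in Hv.
  destruct (sw s (i + 1)) as [b o'] eqn:E.
  move: E; case: o o' Hi Hv => [] [] Hi Hv E.
  - left; split; [exact Hd1|]. rewrite E. f_equal. f_equal.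
    apply (out_uniq (iA (cc true i))); [exact (proj1 (vp_same _ _ _) Hv) | apply Lrun_t].
  - right; split; [exact Hd1| by rewrite E].
  - right; split; [exact Hd1| by rewrite E].
  - left; split; [exact Hd1|]. rewrite E. f_equal. f_equal.
    apply (in_uniq _ _ (iA (cc false i))); [exact (proj1 (vp_same _ _ _) Hv) | apply Lrun_f].
Qed.

Lemma step_left o i : R o i -> indom (slo s) (shi s) (i - 1) -> R o (i - 1) \/ B o (i - 1).
Proof.
  move=> [Hd Hi] Hd1. have Hd' : indom (slo s) (shi s) (i - 1 + 1) by rewrite Z.sub_add.
  have Hv := Hs.2.1 (i - 1) Hd1 Hd'. rewrite Z.sub_add Hi in Hv.
  destruct (sw s (i - 1)) as [b o'] eqn:E.
  move: E; case: o o' Hi Hv => [] [] Hi Hv E.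
  - left; split; [exact Hd1|]. rewrite E. f_equal. f_equal.
    apply (in_uniq _ _ (iA (cc true i))); [exact (proj1 (vp_same _ _ _) Hv) |].
    have := Lrun_t (i - 1). by rewrite Z.sub_add.
  - right; split; [exact Hd1| by rewrite E].
  - right; split; [exact Hd1| by rewrite E].
  - left; split; [exact Hd1|]. rewrite E. f_equal. f_equal.
    apply (out_uniq (iA (cc false i))); [exact (proj1 (vp_same _ _ _) Hv) |].
    have := Lrun_f (i - 1). by rewrite Z.sub_add.
Qed.

Hypothesis Hw : is_walk s.

Lemma lo_end o l : slo s = Some l -> ~ R o (l + 1).
Proof.
  move=> Hlo [Hd Hi]. apply (Hw.2.1 l (iA (cc o l), o) Hlo).
  apply ext_left; [exact Hs | exact Hlo | exact Hd |].
  rewrite Hi. apply valid_run.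
Qed.

Lemma hi_end o h : shi s = Some h -> ~ R o (h - 1).
Proof.
  move=> Hhi [Hd Hi]. apply (Hw.2.2 h (iA (cc o h), o) Hhi).
  apply ext_right; [exact Hs | exact Hhi | exact Hd |].
  rewrite Hi. have := valid_run o (h - 1). by rewrite Z.sub_add.
Qed.

Lemma cc_per o i : cc o (i + Z.of_nat m) = cc o i.
Proof. by rewrite /cc (ph_per m k0 Hm i). Qed.

Lemma kiss_contra o : ~ kisses_itself s -> forall a b, B o a -> B o b -> a < k0 ->
  k0 + Z.of_nat m <= b -> (forall i, a < i < b -> R o i) -> False.
Proof.
  move=> Hnk a b [Hda Hoa] [Hdb Hob] Hak Hkb Hrun.
  have Hm' := Hm.
  have Ra1 := Hrun (a + 1) ltac:(lia).
  have Ram := Hrun (a + Z.of_nat m) ltac:(lia).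
  have Rbm := Hrun (b - Z.of_nat m) ltac:(lia).
  have sameE : forall k, 0 < k < b - Z.of_nat m - a ->
      sw s (a + k) = sw s (a + Z.of_nat m + k).
  { move=> k Hk. rewrite (Hrun (a + k) ltac:(lia)).2 (Hrun (a + Z.of_nat m + k) ltac:(lia)).2.
    replace (a + Z.of_nat m + k) with (a + k + Z.of_nat m) by lia.
    by rewrite cc_per. }
  have lendE : lend (sw s a) = lend (sw s (a + Z.of_nat m)).
  { have Hv := (Hs.2.1 a Hda Ra1.1).1. rewrite Hv Ra1.2 Ram.2.
    have := (valid_run o (a + Z.of_nat m)).1. move=> ->.
    replace (a + Z.of_nat m + 1) with (a + 1 + Z.of_nat m) by lia.
    by rewrite cc_per. }
  apply Hnk. case: o Hoa Hob Hrun Ra1 Ram Rbm sameE lendE => Hoa Hob Hrun Ra1 Ram Rbm sameE lendE.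
  - exists a, (b - Z.of_nat m), (a + Z.of_nat m), b.
    split; [|split; [|left]].
    + split; [exact Hda|split; [exact Rbm.1|split; [lia|split]]].
      * by rewrite Hoa. * by rewrite Rbm.2.
    + split; [exact Ram.1|split; [exact Hdb|split; [lia|split]]].
      * by rewrite Ram.2. * by rewrite Hob.
    + split; [lia|split; [exact lendE|]]. exact sameE.
  - exists (a + Z.of_nat m), b, a, (b - Z.of_nat m).
    split; [|split; [|left]].
    + split; [exact Ram.1|split; [exact Hdb|split; [lia|split]]].
      * by rewrite Ram.2. * by rewrite Hob.
    + split; [exact Hda|split; [exact Rbm.1|split; [lia|split]]].
      * by rewrite Hoa. * by rewrite Rbm.2.
    + split; [lia|split; [by rewrite lendE|]].
      move=> k Hk. symmetry. apply sameE. lia.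
Qed.

Lemma conv_right o : (forall n : nat, R o (k0 + Z.of_nat n)) -> ends_with_cycle iA s m c.
Proof.
  move=> H. have H0 := (H 0%N).1.
  split.
  - destruct (shi s) as [z|] eqn:E; [exfalso|reflexivity].
    have H0' := H0. unfold indom in H0'.
    have := (H (Z.to_nat (z - k0))).1. unfold indom. rewrite E. lia.
  - exists k0. split; [by rewrite Z.add_0_r in H0|].
    case: o H => H; [left|right]; move=> n; rewrite (H n).2 /cc ph_k0 //; exact Hm.
Qed.

Lemma conv_left o : (forall n : nat, R o (k0 - 1 - Z.of_nat n)) -> ends_with_cycle iA (str_inv s) m c.
Proof.
  move=> H. have H0 := (H 0%N).1.
  have Elo : slo s = None.
  { destruct (slo s) as [z|] eqn:E; [exfalso|reflexivity].
    have H0' := H0. unfold indom in H0'.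
    have := (H (Z.to_nat (k0 - 1 - z))).1. unfold indom. rewrite E. lia. }
  split.
  - by rewrite /str_inv /= Elo.
  - exists (1 - k0). split.
    + move: H0. rewrite /indom /str_inv. cbn [slo shi option_map]. rewrite Elo.
      destruct (shi s); cbn [option_map]; intuition lia.
    + have Hm' := Hm.
      case: o H => H; [right|left]; move=> n; rewrite /str_inv; cbn [sw];
      replace (- (1 - k0 + Z.of_nat n)) with (k0 - 1 - Z.of_nat n) by lia;
      rewrite (H n).2 /cc ph_km1 //=.
      have Hn := ltn_mod n m.
      have -> : (m - 1 - (m - 1 - n %% m))%N = n %% m by move: Hn; rewrite Hm'; lia.
      done.
Qed.

End Main.

Close Scope Z_scope.

Theorem lemma5p9 (Q Qb : bquiver) (iV : qV Q -> qV Qb) (iA : qA Q -> qA Qb)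
  (hQ : locally_gentle Q) (hb : is_blossoming iV iA)
  (omega : str Qb) (hw : is_walk omega) (hnk : ~ kisses_itself omega)
  (m : nat) (c : nat -> qA Q) (hc : cycle_not_in_I m c)
  (hfac : has_cycle_factor iA omega m c) :
  ends_with_cycle iA omega m c \/ ends_with_cycle iA (str_inv omega) m c.
Proof.
  have Hm' := Hm _ _ _ hc.
  have Hs := hw.1.
  case: hfac => k [Hdom Hocc].
  have main : forall o : bool,
      (forall l, (l < m)%N -> R Q Qb iA m c omega k o (k + Z.of_nat l)%Z) ->
      ends_with_cycle iA omega m c \/ ends_with_cycle iA (str_inv omega) m c.
  { move=> o H0.
    case: (abstract_run (slo omega) (shi omega) (R Q Qb iA m c omega k o) (B Qb omega o) k m
             Hm' H0).
    - by move=> i [].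
    - move=> i; exact: (step_right _ _ _ _ hb _ _ hc _ _ Hs).
    - move=> i; exact: (step_left _ _ _ _ hb _ _ hc _ _ Hs).
    - move=> l; exact: (lo_end _ _ _ _ hb _ _ hc _ _ Hs hw).
    - move=> h; exact: (hi_end _ _ _ _ hb _ _ hc _ _ Hs hw).
    - exact: (kiss_contra _ _ _ _ hb _ _ hc _ _ Hs o hnk).
    - move=> H; left; exact: (conv_right _ _ _ _ _ hc _ _ _ H).
    - move=> H; right; exact: (conv_left _ _ _ _ _ hc _ _ _ H). }
  case: Hocc => Hocc.
  - apply (main true) => l Hl. split; [exact: Hdom|].
    rewrite Hocc // /cc ph_k0 // modn_small //.
  - apply (main false) => l Hl. split; [exact: Hdom|].
    rewrite Hocc // /cc ph_k0 // modn_small //.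
Qed.
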